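(* Let $\mathfrak{g}_0$ be the noncompact real form of $\mathfrak{g}_2$ with $\mathfrak{k}_0=\mathfrak{su}(2)\oplus\mathfrak{su}(2)$, and let $\rho_1=(-1,-2,3)$, $\rho_2=(1,-3,2)$, $\rho_3=(2,-3,1)$. The admissible $\Theta$-stable parabolic subalgebras $\mathfrak{q}$ of $\mathfrak{g}$ with $\mathfrak{l}_0$ having no compact factors, their faces $\Phi_H$ and the sets $\Phi_H\cap C_\mathfrak{k}$ (the infinitesimal characters of the Dirac cohomology of $A_\mathfrak{q}$) are exactly: (a) the three Borel subalgebras with $\mathfrak{l}=\mathfrak{t}$, defined by $H=\rho_i$ ($i=1,2,3$), giving the discrete series, with $\Phi_H=\Phi_H\cap C_\mathfrak{k}=\{\rho_i\}$; (b) $\mathfrak{q}=\mathfrak{g}$ ($H=0$), giving the trivial module, with $\Phi_H\cap C_\mathfrak{k}=\{\rho_1,\rho_2,\rho_3\}$; (c) $\mathfrak{q}_1$ with $H=(1,-2,1)$ and $\mathfrak{l}=\mathfrak{t}\oplus\mathfrak{g}_{-\epsilon_1+\epsilon_3}\oplus\mathfrak{g}_{\epsilon_1-\epsilon_3}$, with $\Phi_1=\{(2,-3,1),(1,-3,2)\}$ and $\Phi_1\cap C_\mathfrak{k}=\{\rho_2,\rho_3\}$; (d) $\mathfrak{q}_2$ with $H=(0,-1,1)$ and $\mathfrak{l}=\mathfrak{t}\oplus\mathfrak{g}_{-2\epsilon_1+\epsilon_2+\epsilon_3}\oplus\mathfrak{g}_{2\epsilon_1-\epsilon_2-\epsilon_3}$,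 with $\Phi_2=\{(-1,-2,3),(1,-3,2)\}$ and $\Phi_2\cap C_\mathfrak{k}=\{\rho_1,\rho_2\}$. All these $A_\mathfrak{q}$ modules are distinguished by their Dirac cohomology.
   Context: Identify $i\mathfrak{t}_0\cong\mathfrak{t}^*_\mathbb{R}$ with $\{(x_1,x_2,x_3)\in\mathbb{R}^3: x_1+x_2+x_3=0\}$ via the standard inner product, $\mu(H)=\langle\mu,H\rangle$. The roots of $\mathfrak{g}_2$ are $\pm$ the standard positive roots $\epsilon_1-\epsilon_2,\ -\epsilon_1+\epsilon_3,\ -\epsilon_2+\epsilon_3,\ -2\epsilon_1+\epsilon_2+\epsilon_3,\ -\epsilon_1-\epsilon_2+2\epsilon_3,\ \epsilon_1-2\epsilon_2+\epsilon_3$; the Weyl group $W$ is dihedral of order 12. The compact roots are $\pm(\epsilon_1-\epsilon_2)$, $\pm(-\epsilon_1-\epsilon_2+2\epsilon_3)$, with $\Delta^+_\mathfrak{k}=\{\epsilon_1-\epsilon_2,-\epsilon_1-\epsilon_2+2\epsilon_3\}$; so $H$ is $\mathfrak{k}$-dominant iff $H_2\leq H_1\leq -H_2$, and $C_\mathfrak{k}$ is this chamber. $\rho_1,\rho_2,\rho_3$ are the half sums of positive roots of the three positive systems containing $\Delta^+_\mathfrak{k}$ ($\rho_1$ for the standard one); $\rho=\rho_1$. For $H$: $\mathfrak{l}=\mathfrak{t}\oplus\bigoplus_{\alpha(H)=0}\mathfrak{g}_\alpha$, $\mathfrak{u}=\bigoplus_{\alpha(H)>0}\mathfrak{g}_\alpha$,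 $\mathfrak{q}=\mathfrak{l}\oplus\mathfrak{u}$, admissible if $H$ is $\mathfrak{k}$-dominant; $\mathfrak{l}_0=\mathfrak{l}\cap\mathfrak{g}_0$, ''no compact factors'' means no compact simple ideal. Face $\Phi_H=\{\mu\in W\rho:\mu(H)\geq\nu(H)\ \forall\nu\in W\rho\}$. $A_\mathfrak{q}=A_\mathfrak{q}(0)$ Vogan–Zuckerman module; its Dirac cohomology consists of $\widetilde K$-types with infinitesimal characters in $\Phi_H\cap C_\mathfrak{k}$. *)

(* Defs.v *)
(* Combinatorial model of the root data of the
   noncompact real form of g2 used in Theorem 6.1.  Vectors of
   i t_0 ~ t^*_R are triples over an arbitrary real field R (e.g. the reals),
   lying in the plane x1+x2+x3 = 0; mu(H) = <mu,H> (standard inner product). *)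
From HB Require Import structures.
From mathcomp Require Import all_boot all_order all_algebra.
Set Implicit Arguments. Unset Strict Implicit. Unset Printing Implicit Defensive.
Import Order.TTheory GRing.Theory Num.Theory.
Local Open Scope ring_scope.

Definition v3 (R : realFieldType) : Type := (R * R * R)%type.

Definition mkv {R : realFieldType} (a b c : int) : v3 R :=
  (a%:~R, b%:~R, c%:~R).

Definition ip {R : realFieldType} (u v : v3 R) : R :=
  u.1.1 * v.1.1 + u.1.2 * v.1.2 + u.2 * v.2.

Definition vopp {R : realFieldType} (u : v3 R) : v3 R := (- u.1.1, - u.1.2, - u.2).
Definition vsub {R : realFieldType} (u v : v3 R) : v3 R :=
  (u.1.1 - v.1.1, u.1.2 - v.1.2, u.2 - v.2).
Definition vscale {R : realFieldType} (c : R) (u : v3 R) : v3 R :=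
  (c * u.1.1, c * u.1.2, c * u.2).

Definition in_t {R : realFieldType} (u : v3 R) : bool := u.1.1 + u.1.2 + u.2 == 0.

Definition pos_roots (R : realFieldType) : seq (v3 R) :=
  [:: mkv 1 (-1) 0; mkv (-1) 0 1; mkv 0 (-1) 1;
      mkv (-2) 1 1; mkv (-1) (-1) 2; mkv 1 (-2) 1].
Definition g2roots (R : realFieldType) : seq (v3 R) :=
  pos_roots R ++ map vopp (pos_roots R).

Definition pos_compact_roots (R : realFieldType) : seq (v3 R) :=
  [:: mkv 1 (-1) 0; mkv (-1) (-1) 2].
Definition compact_roots (R : realFieldType) : seq (v3 R) :=
  pos_compact_roots R ++ map vopp (pos_compact_roots R).

Definition kdom {R : realFieldType} (H : v3 R) : bool :=
  all (fun a => 0 <= ip a H) (pos_compact_roots R).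

Definition l_roots {R : realFieldType} (H : v3 R) : seq (v3 R) :=
  [seq a <- g2roots R | ip a H == 0].
Definition u_roots {R : realFieldType} (H : v3 R) : seq (v3 R) :=
  [seq a <- g2roots R | 0 < ip a H].
(* q is determined by (and identified with) its set of roots, listed in the
   fixed order of [g2roots R]; two H give the same q iff q_roots agree *)
Definition q_roots {R : realFieldType} (H : v3 R) : seq (v3 R) :=
  [seq a <- g2roots R | 0 <= ip a H].

(* l_0 has no compact factors: there is no nonzero ideal of [l,l]
   (= a nonempty union S of irreducible components of the root system of l,
   i.e. S orthogonal to the remaining roots of l) consisting of compact roots.
   (For the equal-rank real form with compact Cartan t_0, a simple ideal of l_0
   is compact iff all its roots are compact.) *)
Definition noCompactFactors {R : realFieldType} (H : v3 R) : Prop :=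
  ~ (exists S : seq (v3 R),
       [/\ S != [::],
           {subset S <= l_roots H},
           {subset S <= compact_roots R} &
           forall a b, a \in S -> b \in l_roots H -> b \notin S -> ip a b = 0]).

Definition refl {R : realFieldType} (a mu : v3 R) : v3 R :=
  vsub mu (vscale (2 * ip mu a / ip a a) a).

Definition rho1 (R : realFieldType) : v3 R := mkv (-1) (-2) 3.
Definition rho2 (R : realFieldType) : v3 R := mkv 1 (-3) 2.
Definition rho3 (R : realFieldType) : v3 R := mkv 2 (-3) 1.

Inductive in_Wrho (R : realFieldType) : v3 R -> Prop :=
| Wrho_base : in_Wrho (rho1 R)
| Wrho_step : forall a mu, a \in g2roots R -> in_Wrho mu -> in_Wrho (refl a mu).

Definition face {R : realFieldType} (H mu : v3 R) : Prop :=
  in_Wrho mu /\ (forall nu, in_Wrho nu -> ip nu H <= ip mu H).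

Definition dirac {R : realFieldType} (H mu : v3 R) : Prop := face H mu /\ kdom mu.

Definition Hq1 (R : realFieldType) : v3 R := mkv 1 (-2) 1.
Definition Hq2 (R : realFieldType) : v3 R := mkv 0 (-1) 1.
Definition H0 (R : realFieldType) : v3 R := mkv 0 0 0.

Definition Hlist (R : realFieldType) : seq (v3 R) :=
  [:: rho1 R; rho2 R; rho3 R; H0 R; Hq1 R; Hq2 R].

(* Main.v *)
Require Import Defs.
From HB Require Import structures.
From mathcomp Require Import all_boot all_order all_algebra ring lra.
Import Order.TTheory GRing.Theory Num.Theory.
Local Open Scope ring_scope.

Definition int3 := (int * int * int)%type.
Definition ipZ (u v : int3) : int := u.1.1 * v.1.1 + u.1.2 * v.1.2 + u.2 * v.2.
Definition mkvt {R : realFieldType} (t : int3) : v3 R := mkv t.1.1 t.1.2 t.2.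

Definition rootsZ : seq int3 :=
  [:: (1,-1,0); (-1,0,1); (0,-1,1); (-2,1,1); (-1,-1,2); (1,-2,1);
      (-1,1,0); (1,0,-1); (0,1,-1); (2,-1,-1); (1,1,-2); (-1,2,-1)].
Definition compactZ : seq int3 := [:: (1,-1,0); (-1,-1,2); (-1,1,0); (1,1,-2)].

Section S.
Variable R : realFieldType.

Lemma g2roots_eq : g2roots R = map mkvt rootsZ.
Proof.
rewrite /g2roots /pos_roots /= /vopp /mkvt /mkv /=.
by rewrite !intrN !opprK ?mulr0z ?oppr0.
Qed.

Lemma compact_eq : compact_roots R = map mkvt compactZ.
Proof.
rewrite /compact_roots /pos_compact_roots /= /vopp /mkvt /mkv /=.
by rewrite !intrN !opprK ?mulr0z ?oppr0.
Qed.

Lemma mkvt_inj : injective (@mkvt R).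
Proof.
move=> [[a b] c] [[a' b'] c'] /= [/intr_inj -> /intr_inj -> /intr_inj ->].
done.
Qed.

Lemma ip_mkvt s t : ip (@mkvt R s) (mkvt t) = (ipZ s t)%:~R.
Proof. by rewrite /ip /ipZ /= !intrD !intrM. Qed.

Definition reflZ (t s : int3) : int3 :=
  let c := ((2 * ipZ s t) %/ ipZ t t)%Z in (s.1.1 - c * t.1.1, s.1.2 - c * t.1.2, s.2 - c * t.2).
Definition okstep (t s : int3) : bool :=
  (ipZ t t != 0) && (((2 * ipZ s t) %/ ipZ t t)%Z * ipZ t t == 2 * ipZ s t).

Lemma refl_mkvt t s : okstep t s -> refl (@mkvt R t) (mkvt s) = mkvt (reflZ t s).
Proof.
case/andP=> nz /eqP e.
set c := ((2 * ipZ s t) %/ ipZ t t)%Z in e *.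
have nzR : (ipZ t t)%:~R != 0 :> R by rewrite intr_eq0.
have ec : 2 * ip (mkvt s) (mkvt t) / ip (mkvt t) (mkvt t) = c%:~R :> R.
  rewrite !ip_mkvt; apply: (mulIf nzR); rewrite divfK // -intrM e intrM.
  by [].
rewrite /refl ec /vsub /vscale /mkvt /mkv /reflZ /= -/c.
by rewrite !intrB !intrM.
Qed.

Definition rho1Z : int3 := (-1,-2,3).
Fixpoint walk (ts : seq int3) : int3 :=
  if ts is t :: ts' then reflZ t (walk ts') else rho1Z.
Fixpoint okword (ts : seq int3) : bool :=
  if ts is t :: ts' then [&& t \in rootsZ, okstep t (walk ts') & okword ts'] else true.
Definition wordsZ : seq (seq int3) :=
 [:: [:: ]; [:: (1,-1,0)]; [:: (-1,0,1)]; [:: (0,-1,1)]; [:: (-2,1,1)]; [:: (-1,-1,2)]; [:: (1,-2,1)]; [:: (-1,0,1); (1,-1,0)]; [:: (0,-1,1); (1,-1,0)]; [:: (-2,1,1); (1,-1,0)]; [:: (-1,-1,2); (1,-1,0)]; [:: (1,-2,1); (1,-1,0)]].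
Definition W12Z : seq int3 := map walk wordsZ.

Lemma words_ok : all okword wordsZ. Proof. by []. Qed.
Lemma W12_closed : all (fun t => all (fun s => okstep t s && (reflZ t s \in W12Z)) W12Z) rootsZ.
Proof. by vm_compute. Qed.

Lemma walk_in ts : okword ts -> in_Wrho (@mkvt R (walk ts)).
Proof.
elim: ts => [|t ts IH] /=; first by constructor.
case/and3P=> tr ok ow; rewrite -refl_mkvt //.
by apply: Wrho_step; [rewrite g2roots_eq; apply: map_f | apply: IH].
Qed.

Lemma W12_in s : s \in W12Z -> in_Wrho (@mkvt R s).
Proof. by case/mapP=> w wi ->; apply: walk_in; apply: (allP words_ok). Qed.

Lemma Wrho_W12 mu : in_Wrho mu -> exists2 s, s \in W12Z & mu = @mkvt R s.
Proof.
elim=> [|a m]; first by exists rho1Z.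
rewrite g2roots_eq => /mapP[t tr ->] _ [s sW ->].
have /andP[ok sin] := allP (allP W12_closed t tr) s sW.
by exists (reflZ t s) => //; rewrite refl_mkvt.
Qed.

Definition faceZ (h : int3) : seq int3 :=
  [seq s <- W12Z | all (fun s' => ipZ s' h <= ipZ s h) W12Z].
Definition kdomZ (s : int3) : bool := all (fun a => 0 <= ipZ a s) [:: (1,-1,0); (-1,-1,2)].
Definition diracZ (h : int3) : seq int3 := [seq s <- faceZ h | kdomZ s].

Lemma kdom_mkvt s : kdom (@mkvt R s) = kdomZ s.
Proof.
rewrite /kdom; have -> : pos_compact_roots R = map mkvt [:: (1,-1,0); (-1,-1,2)] by [].
rewrite all_map /kdomZ; apply: eq_all => a /=; by rewrite ip_mkvt ler0z.
Qed.

Lemma face_iff h mu : face (@mkvt R h) mu <-> mu \in map mkvt (faceZ h).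
Proof.
split.
  case=> /Wrho_W12 [s sW ->] Hm; apply: map_f; rewrite mem_filter sW andbT.
  apply/allP => s' s'W; have := Hm _ (W12_in _ s'W); by rewrite !ip_mkvt ler_int.
case/mapP=> s; rewrite mem_filter => /andP[/allP Ha sW] ->; split; first exact: W12_in.
move=> nu /Wrho_W12 [s' s'W ->]; rewrite !ip_mkvt ler_int; exact: Ha.
Qed.

Lemma dirac_iff h mu : dirac (@mkvt R h) mu <-> mu \in map mkvt (diracZ h).
Proof.
rewrite /dirac; split.
  case=> /face_iff /mapP [s sf ->] k; apply: map_f; by rewrite mem_filter -kdom_mkvt k.
case/mapP=> s; rewrite mem_filter => /andP[k sf] ->; split.
  by apply/face_iff; apply: map_f.
by rewrite kdom_mkvt.
Qed.

Lemma l_roots_mkvt h : l_roots (@mkvt R h) = map mkvt [seq t <- rootsZ | ipZ t h == 0].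
Proof.
rewrite /l_roots g2roots_eq filter_map; congr map; apply: eq_filter => t /=.
by rewrite ip_mkvt intr_eq0.
Qed.

Lemma q_roots_mkvt h : q_roots (@mkvt R h) = map mkvt [seq t <- rootsZ | 0 <= ipZ t h].
Proof.
rewrite /q_roots g2roots_eq filter_map; congr map; apply: eq_filter => t /=.
by rewrite ip_mkvt ler0z.
Qed.

Definition lZ h := [seq t <- rootsZ | ipZ t h == 0].
Definition noCFcheck (h : int3) : bool :=
  all (fun c => (c \in lZ h) ==> has (fun b => (b \notin compactZ) && (ipZ c b != 0)) (lZ h)) compactZ.

Lemma noCF_mkvt h : noCFcheck h -> noCompactFactors (@mkvt R h).
Proof.
move=> chk [[|a S] [//= _ Sl Sc Sorth]].
have := Sl a (mem_head _ _); rewrite l_roots_mkvt => /mapP[c cl ac]; subst a.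
have := Sc _ (mem_head _ _); rewrite compact_eq (mem_map mkvt_inj) => cc.
have := allP chk c cc; rewrite -/(lZ h) cl /= => /hasP[b bl /andP[bnc nz]].
have := Sorth (mkvt c) (mkvt b) (mem_head _ _).
rewrite l_roots_mkvt (mem_map mkvt_inj) bl => /(_ isT).
have bS : mkvt b \notin (mkvt c :: S).
  apply/negP => /Sc; by rewrite compact_eq (mem_map mkvt_inj) (negbTE bnc).
move=> /(_ bS) /eqP; by rewrite ip_mkvt intr_eq0 (negbTE nz).
Qed.

Lemma qeq (H : v3 R) h :
  (forall t, t \in rootsZ -> if 0 <= ipZ t h then 0 <= ip (mkvt t) H else ip (mkvt t) H < 0) ->
  q_roots H = q_roots (mkvt h).
Proof.
move=> E; rewrite /q_roots g2roots_eq !filter_map; congr map.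
apply: eq_in_filter => t tr /=; rewrite ip_mkvt ler0z; have := E t tr.
case: ifP => _ //; move=> lt; apply/negbTE; by rewrite -ltNge.
Qed.

Lemma rootsZ_all (P : int3 -> Prop) :
  P (1,-1,0) -> P (-1,0,1) -> P (0,-1,1) -> P (-2,1,1) -> P (-1,-1,2) -> P (1,-2,1) ->
  P (-1,1,0) -> P (1,0,-1) -> P (0,1,-1) -> P (2,-1,-1) -> P (1,1,-2) -> P (-1,2,-1) ->
  forall t, t \in rootsZ -> P t.
Proof.
move=> p1 p2 p3 p4 p5 p6 p7 p8 p9 p10 p11 p12 t; rewrite /rootsZ !inE.
by repeat (case/orP => [/eqP->//|]); move/eqP->.
Qed.

Lemma Hlist_eq : Hlist R = map mkvt [:: (-1,-2,3); (1,-3,2); (2,-3,1); (0,0,0); (1,-2,1); (0,-1,1)].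
Proof. by []. Qed.

Lemma or1P (x a : v3 R) : x \in [:: a] <-> x = a.
Proof. by rewrite inE; split => [/eqP|->]. Qed.
Lemma or2P (x a b : v3 R) : x \in [:: a; b] <-> x = a \/ x = b.
Proof. rewrite !inE; split => [/orP[/eqP|/eqP]|[]->]; rewrite ?eqxx ?orbT; auto. Qed.
Lemma or3P' (x a b c : v3 R) : x \in [:: a; b; c] <-> [\/ x = a, x = b | x = c].
Proof.
rewrite !inE; split => [/or3P[/eqP->|/eqP->|/eqP->]|[->|->|->]]; rewrite ?eqxx ?orbT //.
- by constructor 1.
- by constructor 2.
- by constructor 3.
Qed.

Lemma distinct_dirac h h' :
  has (fun s => s \notin diracZ h') (diracZ h) ->
  ~ (forall mu, dirac (@mkvt R h) mu <-> dirac (mkvt h') mu).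
Proof.
case/hasP=> s sd sn E.
have d1 : dirac (@mkvt R h) (mkvt s) by apply/dirac_iff; rewrite (mem_map mkvt_inj).
have := (E _).1 d1; move/dirac_iff; by rewrite (mem_map mkvt_inj) (negbTE sn).
Qed.
End S.

Lemma in_t_mkvt (R : realFieldType) h : in_t (@mkvt R h) = (h.1.1 + h.1.2 + h.2 == 0).
Proof. by rewrite /in_t /= -!intrD intr_eq0. Qed.

Lemma classif (R : realFieldType) (H : v3 R) : in_t H -> kdom H -> noCompactFactors H ->
  exists2 H', H' \in Hlist R & q_roots H = q_roots H'.
Proof.
case: H => [[x y] z]; rewrite /in_t /kdom /= /ip /= => /eqP ht /andP[k1 /andP[k2 _]] nc.
have k1' : y <= x by lra.
have k2' : x + y <= 0 by lra.
have inH : forall h, h \in [:: (-1,-2,3); (1,-3,2); (2,-3,1); (0,0,0); (1,-2,1); (0,-1,1)] ->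
    @mkvt R h \in Hlist R.
  by move=> h hi; rewrite Hlist_eq (mem_map (@mkvt_inj R)).
have noL : forall L : seq int3, L != [::] -> all (fun t => t \in rootsZ) L ->
    all (fun t => t \in compactZ) L ->
    (forall t, t \in L -> ip (mkvt t) (x, y, z) = 0) ->
    (forall t, t \in rootsZ -> ip (mkvt t) (x, y, z) = 0 -> t \in L) -> False.
  move=> L Ln Lr Lc Lz Lo; apply: nc; exists (map mkvt L); split.
  - by case: L Ln {Lr Lc Lz Lo}.
  - move=> a /mapP[t tL ->]; rewrite /l_roots mem_filter g2roots_eq (mem_map (@mkvt_inj R)).
    by rewrite (allP Lr t tL) andbT Lz.
  - move=> a /mapP[t tL ->]; by rewrite compact_eq (mem_map (@mkvt_inj R)) (allP Lc t tL).
  - move=> a b _; rewrite /l_roots mem_filter g2roots_eq => /andP[/eqP e /mapP[t tr bt]]; subst b.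
    by rewrite (mem_map (@mkvt_inj R)) (Lo t tr e).
case: (eqVneq x y) => [exy | nxy].
  case: (eqVneq x 0) => [x0 | xn0].
    exists (mkvt (0,0,0)); first by apply: inH; vm_compute.
    apply: qeq; apply: rootsZ_all; rewrite /ip /=; lra.
  have xn : x < 0 by rewrite lt_neqAle xn0 /=; lra.
  exfalso; apply: (noL [:: (1,-1,0); (-1,1,0)]); try by vm_compute.
    by move=> t; rewrite !inE => /orP[/eqP->|/eqP->]; rewrite /ip /=; lra.
  apply: rootsZ_all; rewrite /ip /= => e; first [ by rewrite !inE eqxx ?orbT | lra ].
have xy : y < x by rewrite lt_neqAle k1' andbT eq_sym.
case: (eqVneq (x + y) 0) => [xy0 | nxy0].
  exfalso; apply: (noL [:: (-1,-1,2); (1,1,-2)]); try by vm_compute.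
    by move=> t; rewrite !inE => /orP[/eqP->|/eqP->]; rewrite /ip /=; lra.
  apply: rootsZ_all; rewrite /ip /= => e; first [ by rewrite !inE eqxx ?orbT | lra ].
have sxy : x + y < 0 by rewrite lt_neqAle nxy0 k2'.
case: (ltgtP x 0) => [xlt | xgt | x0].
- exists (mkvt (-1,-2,3)); first by apply: inH; vm_compute.
  apply: qeq; apply: rootsZ_all; rewrite /ip /=; lra.
- case: (ltgtP y (-2 * x)) => [ylt | ygt | ye].
  + exists (mkvt (1,-3,2)); first by apply: inH; vm_compute.
    apply: qeq; apply: rootsZ_all; rewrite /ip /=; lra.
  + exists (mkvt (2,-3,1)); first by apply: inH; vm_compute.
    apply: qeq; apply: rootsZ_all; rewrite /ip /=; lra.
  + exists (mkvt (1,-2,1)); first by apply: inH; vm_compute.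
    apply: qeq; apply: rootsZ_all; rewrite /ip /=; lra.
- exists (mkvt (0,-1,1)); first by apply: inH; vm_compute.
  apply: qeq; apply: rootsZ_all; rewrite /ip /=; lra.
Qed.

Lemma partA (R : realFieldType) h : faceZ h = [:: h] -> diracZ h = [:: h] -> lZ h = [::] ->
  [/\ l_roots (@mkvt R h) = [::],
      (forall mu, face (@mkvt R h) mu <-> mu = mkvt h) &
      (forall mu, dirac (@mkvt R h) mu <-> mu = mkvt h)].
Proof.
move=> f d l; split.
- by rewrite l_roots_mkvt -/(lZ h) l.
- move=> mu; apply: iff_trans (face_iff _ _ _) _; rewrite f; exact: or1P.
- move=> mu; apply: iff_trans (dirac_iff _ _ _) _; rewrite d; exact: or1P.
Qed.

Theorem theorem6p1 (R : realFieldType) :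
  (forall H : v3 R, in_t H -> kdom H -> noCompactFactors H ->
     exists2 H', H' \in Hlist R & q_roots H = q_roots H')
  /\
  (forall H', H' \in Hlist R -> [/\ in_t H', kdom H' & noCompactFactors H'])
  /\
  uniq (map q_roots (Hlist R))
  /\
  (forall r, r \in [:: rho1 R; rho2 R; rho3 R] ->
     [/\ l_roots r = [::],
         (forall mu, face r mu <-> mu = r) &
         (forall mu, dirac r mu <-> mu = r)])
  /\
  (l_roots (H0 R) = g2roots R /\
   forall mu, dirac (H0 R) mu <-> [\/ mu = rho1 R, mu = rho2 R | mu = rho3 R])
  /\
  [/\ (forall a, a \in l_roots (Hq1 R) <-> a = mkv (-1) 0 1 \/ a = mkv 1 0 (-1)),
      (forall mu, face (Hq1 R) mu <-> mu = mkv 2 (-3) 1 \/ mu = mkv 1 (-3) 2) &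
      (forall mu, dirac (Hq1 R) mu <-> mu = rho2 R \/ mu = rho3 R)]
  /\
  [/\ (forall a, a \in l_roots (Hq2 R) <-> a = mkv (-2) 1 1 \/ a = mkv 2 (-1) (-1)),
      (forall mu, face (Hq2 R) mu <-> mu = mkv (-1) (-2) 3 \/ mu = mkv 1 (-3) 2) &
      (forall mu, dirac (Hq2 R) mu <-> mu = rho1 R \/ mu = rho2 R)]
  /\
  (forall H H', H \in Hlist R -> H' \in Hlist R -> H != H' ->
     ~ (forall mu, dirac H mu <-> dirac H' mu)).
Proof.
split; first exact: classif.
split.
  move=> H'; rewrite Hlist_eq => /mapP[h hi ->].
  have chk : all (fun h => [&& h.1.1 + h.1.2 + h.2 == 0, kdomZ h & noCFcheck h])
    [:: (-1,-2,3); (1,-3,2); (2,-3,1); (0,0,0); (1,-2,1); (0,-1,1)] by vm_compute.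
  case/and3P: (allP chk h hi) => a b c.
  by split; [rewrite in_t_mkvt | rewrite kdom_mkvt | apply: noCF_mkvt].
split.
  rewrite Hlist_eq -map_comp.
  rewrite (eq_map (fun h => q_roots_mkvt R h)) map_comp (map_inj_uniq (inj_map (@mkvt_inj R))).
  by vm_compute.
split.
  move=> r; rewrite !inE => /or3P[/eqP->|/eqP->|/eqP->].
  - change (rho1 R) with (@mkvt R (-1,-2,3)); apply: partA; by vm_compute.
  - change (rho2 R) with (@mkvt R (1,-3,2)); apply: partA; by vm_compute.
  - change (rho3 R) with (@mkvt R (2,-3,1)); apply: partA; by vm_compute.
split.
  change (H0 R) with (@mkvt R (0,0,0)); split.
    rewrite l_roots_mkvt g2roots_eq; congr map; by vm_compute.
  move=> mu; apply: iff_trans (dirac_iff _ _ _) _.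
  have -> : diracZ (0,0,0) = [:: (-1,-2,3); (1,-3,2); (2,-3,1)] by vm_compute.
  exact: or3P'.
split.
  change (Hq1 R) with (@mkvt R (1,-2,1)); split.
  - move=> a; rewrite l_roots_mkvt.
    have -> : [seq t <- rootsZ | ipZ t (1,-2,1) == 0] = [:: (-1,0,1); (1,0,-1)] by vm_compute.
    exact: or2P.
  - move=> mu; apply: iff_trans (face_iff _ _ _) _.
    have -> : faceZ (1,-2,1) = [:: (1,-3,2); (2,-3,1)] by vm_compute.
    rewrite [map _ _]/=; apply: iff_trans (or2P _ _ _ _) _; split => -[->|->]; by [right|left].
  - move=> mu; apply: iff_trans (dirac_iff _ _ _) _.
    have -> : diracZ (1,-2,1) = [:: (1,-3,2); (2,-3,1)] by vm_compute.
    exact: or2P.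
split.
  change (Hq2 R) with (@mkvt R (0,-1,1)); split.
  - move=> a; rewrite l_roots_mkvt.
    have -> : [seq t <- rootsZ | ipZ t (0,-1,1) == 0] = [:: (-2,1,1); (2,-1,-1)] by vm_compute.
    exact: or2P.
  - move=> mu; apply: iff_trans (face_iff _ _ _) _.
    have -> : faceZ (0,-1,1) = [:: (-1,-2,3); (1,-3,2)] by vm_compute.
    exact: or2P.
  - move=> mu; apply: iff_trans (dirac_iff _ _ _) _.
    have -> : diracZ (0,-1,1) = [:: (-1,-2,3); (1,-3,2)] by vm_compute.
    exact: or2P.
move=> H H'; rewrite Hlist_eq => /mapP[h hi ->] /mapP[h' hi' ->] ne.
have nh : h != h' by apply: contraNneq ne => ->.
pose HL : seq int3 := [:: (-1,-2,3); (1,-3,2); (2,-3,1); (0,0,0); (1,-2,1); (0,-1,1)].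
have chk : all (fun h => all (fun h' => (h != h') ==>
    (has (fun s => s \notin diracZ h') (diracZ h) ||
     has (fun s => s \notin diracZ h) (diracZ h'))) HL) HL by vm_compute.
have := allP (allP chk h hi) h' hi'; rewrite nh /= => /orP[d|d].
  exact: (@distinct_dirac R h h' d).
move=> E; apply: (@distinct_dirac R h' h d) => mu; exact: iff_sym.
Qed.
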